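(* For any time warps $f,g$ and any $p\in\overline{\omega}$: (a) $(f\backslash g)(p)=0$ if $p=0$; $(f\backslash g)(p)=\bigvee\{q\in\overline{\omega}\mid f(q)\le g(p)\}$ if $p\in\omega\setminus\{0\}$; and $(f\backslash g)(p)=\bigvee\{q\in\overline{\omega}\mid \exists m\in\omega\,(f(q)\le g(m))\}$ if $p=\omega$. (b) $(g/f)(p)=\bigwedge\{g(q)\mid q\in\overline{\omega},\ p\le f(q)\}$ (with $\bigwedge\emptyset=\omega$).
   Context: Let $\overline{\omega}=\omega\cup\{\omega\}$ be the natural numbers with a top element $\omega$ adjoined, with its natural total order. A time warp is a monotone map $f\colon\overline{\omega}\to\overline{\omega}$ with $f(0)=0$ and $f(\omega)=\bigvee\{f(n)\mid n\in\omega\}$. The set $W$ of time warps is ordered pointwise; $fg:=f\circ g$. The residuals $\backslash,/$ are the binary operations on $W$ satisfying, for all $f,g,h\in W$: $f\le h/g \iff fg\le h \iff g\le f\backslash h$. *)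

(* Defs.v *)
From Stdlib Require Import Arith.

(* omega-bar = natural numbers with a top element Om adjoined. *)
Inductive nbar : Type := Fin (n : nat) | Om.

Definition nle (x y : nbar) : Prop :=
  match x, y with
  | Fin m, Fin n => m <= n
  | _, Om => True
  | Om, Fin _ => False
  end.

Definition is_sup (S : nbar -> Prop) (s : nbar) : Prop :=
  (forall x, S x -> nle x s) /\ (forall u, (forall x, S x -> nle x u) -> nle s u).

(* s is the infimum (meet) of S in omega-bar (meet of the empty set is Om) *)
Definition is_inf (S : nbar -> Prop) (s : nbar) : Prop :=
  (forall x, S x -> nle s x) /\ (forall l, (forall x, S x -> nle l x) -> nle l s).

Record warp : Type := Warp {
  wfun :> nbar -> nbar;
  warp_mono : forall x y, nle x y -> nle (wfun x) (wfun y);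
  warp_zero : wfun (Fin 0) = Fin 0;
  warp_omega : is_sup (fun y => exists n, y = wfun (Fin n)) (wfun Om)
}.

Definition wle (f g : warp) : Prop := forall x, nle (f x) (g x).

(* fg <= h, with fg := f o g *)
Definition comp_le (f g h : warp) : Prop := forall x, nle (f (g x)) (h x).

(* Main.v *)
Require Import Defs.
From Stdlib Require Import Arith Lia Classical.

Lemma nle_refl x : nle x x.
Proof. destruct x; simpl; auto. Qed.

Lemma nle_trans x y z : nle x y -> nle y z -> nle x z.
Proof. destruct x, y, z; simpl; intros; auto; try lia; contradiction. Qed.

Lemma nle_0 x : nle (Fin 0) x.
Proof. destruct x; simpl; auto; lia. Qed.

Lemma nle_total x y : ~ nle x y -> nle y x.
Proof. destruct x, y; simpl; intros; auto; try lia; tauto. Qed.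

Definition stepf (t : nat) (v : nbar) (x : nbar) : nbar :=
  match x with Fin m => if m <=? t then Fin 0 else v | Om => v end.

Lemma stepf_big t v m : t < m -> stepf t v (Fin m) = v.
Proof. intros H; simpl. destruct (m <=? t) eqn:E; auto. apply Nat.leb_le in E; lia. Qed.

Lemma stepf_mono t v x y : nle x y -> nle (stepf t v x) (stepf t v y).
Proof.
  destruct x as [a|], y as [b|]; simpl; intros H; try contradiction.
  - destruct (a <=? t) eqn:E1; [apply nle_0|].
    destruct (b <=? t) eqn:E2; [apply Nat.leb_le in E2; apply Nat.leb_gt in E1; lia|apply nle_refl].
  - destruct (a <=? t); [apply nle_0|apply nle_refl].
  - apply nle_refl.
Qed.

Lemma stepf_zero t v : stepf t v (Fin 0) = Fin 0.
Proof. reflexivity. Qed.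

Lemma stepf_omega t v : is_sup (fun y => exists n, y = stepf t v (Fin n)) (stepf t v Om).
Proof.
  split.
  - intros x [n ->]; simpl. destruct (n <=? t); [apply nle_0|apply nle_refl].
  - intros u Hu. specialize (Hu (stepf t v (Fin (S t))) (ex_intro _ _ eq_refl)).
    rewrite stepf_big in Hu by lia. exact Hu.
Qed.

Definition stepw t v : warp := Warp (stepf t v) (stepf_mono t v) (stepf_zero t v) (stepf_omega t v).


Lemma prefix_bound (f : warp) m0 : exists n, forall i, i < m0 ->
  f (Fin i) = Om \/ ~ nle (Fin n) (f (Fin i)).
Proof.
  induction m0 as [|m IH].
  - exists 0; intros; lia.
  - destruct IH as [n Hn]. destruct (f (Fin m)) as [N|] eqn:E.
    + exists (Nat.max n (S N)). intros i Hi.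
      destruct (Nat.eq_dec i m) as [->|].
      * right. rewrite E; simpl; lia.
      * destruct (Hn i ltac:(lia)) as [H|H]; [left; auto|right].
        intro C; apply H. eapply nle_trans; [|exact C]. simpl; lia.
    + exists n. intros i Hi.
      destruct (Nat.eq_dec i m) as [->|]; [left; auto|]. apply Hn; lia.
Qed.

Theorem lemma2p1
  (ldiv rdiv : warp -> warp -> warp)
  (* ldiv f h = f \ h ,  rdiv h g = h / g *)
  (Hres : forall f g h : warp,
     (wle f (rdiv h g) <-> comp_le f g h) /\ (comp_le f g h <-> wle g (ldiv f h)))
  (f g : warp) (p : nbar) :
  (p = Fin 0 -> ldiv f g p = Fin 0) /\
  (forall n, p = Fin (S n) ->
     is_sup (fun q => nle (f q) (g p)) (ldiv f g p)) /\
  (p = Om ->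
     is_sup (fun q => exists m, nle (f q) (g (Fin m))) (ldiv f g p)) /\
  is_inf (fun y => exists q, nle p (f q) /\ y = g q) (rdiv g f p).
Proof.
  set (k := ldiv f g).
  assert (Hk : comp_le f k g) by (apply (proj2 (Hres f k g)); intro; apply nle_refl).
  assert (Hstep : forall t q, (forall x, ~ nle x (Fin t) -> nle (f q) (g x)) ->
            wle (stepw t q) k).
  { intros t q H. apply (proj2 (Hres f (stepw t q) g)). intro x.
    destruct x as [m|]; simpl.
    - destruct (m <=? t) eqn:E; [rewrite warp_zero; apply nle_0|].
      apply H. simpl. apply Nat.leb_gt in E; lia.
    - apply H. simpl; auto. }
  set (r := rdiv g f).
  assert (Hr : comp_le r f g) by (apply (proj1 (Hres r f g)); intro; apply nle_refl).
  assert (Hstep2 : forall t l, (forall x, ~ nle (f x) (Fin t) -> nle l (g x)) ->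
            wle (stepw t l) r).
  { intros t l H. apply (proj1 (Hres (stepw t l) f g)). intro x. simpl.
    destruct (f x) as [m|] eqn:E.
    - simpl. destruct (m <=? t) eqn:E2; [apply nle_0|].
      apply H. rewrite E. simpl. apply Nat.leb_gt in E2; lia.
    - apply H. rewrite E. simpl; auto. }
  split; [|split; [|split]].
  - intros ->. apply warp_zero.
  - intros n ->. split.
    + intros q Hq. assert (W := Hstep n q).
      assert (A : forall x, ~ nle x (Fin n) -> nle (f q) (g x)).
      { intros x Hx. apply (nle_trans _ _ _ Hq). apply (warp_mono g (Fin (S n)) x).
        destruct x; simpl in *; [lia|exact I]. }
      specialize (W A).
      specialize (W (Fin (S n))). unfold stepw in W; cbn [wfun] in W; rewrite stepf_big in W by lia. exact W.
    + intros u Hu. apply Hu. apply Hk.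
  - intros ->. split.
    + intros q [m Hq]. assert (W := Hstep m q).
      assert (A : forall x, ~ nle x (Fin m) -> nle (f q) (g x)).
      { intros x Hx. apply (nle_trans _ _ _ Hq). apply (warp_mono g (Fin m) x).
        apply nle_total in Hx. exact Hx. }
      specialize (W A).
      exact (W Om).
    + intros u Hu. destruct (warp_omega k) as [_ H2]. apply H2.
      intros x [n ->]. apply Hu. exists n. apply Hk.
  - split.
    + intros y [q [Hq ->]]. eapply nle_trans; [apply (warp_mono r _ _ Hq)|apply Hr].
    + intros l Hl.
      destruct p as [[|n]|].
      * rewrite warp_zero. rewrite <- (warp_zero g). apply Hl. exists (Fin 0). split; [apply nle_0|reflexivity].
      * assert (W := Hstep2 n l).
        assert (A : forall x, ~ nle (f x) (Fin n) -> nle l (g x)).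
        { intros x Hx. apply Hl. exists x. split; [|reflexivity].
          destruct (f x); simpl in *; [lia|exact I]. }
        specialize (W A).
        specialize (W (Fin (S n))). unfold stepw in W; cbn [wfun] in W; rewrite stepf_big in W by lia. exact W.
      *
        assert (Key : forall k0, nle (Fin k0) l -> nle (Fin k0) (r Om)).
        { intros k0 Hk0.
          assert (Hn : exists n, forall q, nle (Fin n) (f q) -> nle (Fin k0) (g q)).
          { destruct (classic (exists m0, nle (Fin k0) (g (Fin m0)))) as [[m0 Hm0]|Hno].
            - destruct (prefix_bound f m0) as [n Hn]. exists n. intros q Hq.
              destruct q as [i|].
              + destruct (lt_dec i m0) as [Hi|Hi].
                * destruct (Hn i Hi) as [H|H]; [|contradiction].
                  eapply nle_trans; [exact Hk0|]. apply Hl. exists (Fin i). rewrite H; simpl; auto.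
                * eapply nle_trans; [exact Hm0|]. apply warp_mono; simpl; lia.
              + eapply nle_trans; [exact Hm0|]. apply warp_mono; simpl; auto.
            - assert (Hg : ~ nle (Fin k0) (g Om)).
              { intro C. destruct (warp_omega g) as [_ H2].
                destruct k0 as [|k1]. { apply Hno. exists 0. apply nle_0. }
                assert (nle (g Om) (Fin k1)).
                { apply H2. intros x [m ->].
                  destruct (g (Fin m)) as [a|] eqn:Ea; simpl.
                  - destruct (le_lt_dec a k1); [lia|].
                    exfalso; apply Hno; exists m; rewrite Ea; simpl; lia.
                  - exfalso; apply Hno; exists m; rewrite Ea; exact I. }
                pose proof (nle_trans _ _ _ C H); simpl in *; lia. }
              destruct (f Om) as [N|] eqn:E.
              + exists (S N). intros q Hq. exfalso.
                pose proof (nle_trans _ _ _ Hq (warp_mono f q Om ltac:(destruct q; simpl; auto))).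
                rewrite E in H; simpl in H; lia.
              + exfalso. apply Hg. eapply nle_trans; [exact Hk0|]. apply Hl. exists Om. rewrite E; simpl; auto. }
          destruct Hn as [n Hn].
          assert (W := Hstep2 n (Fin k0)).
          assert (A : forall x, ~ nle (f x) (Fin n) -> nle (Fin k0) (g x)).
          { intros x Hx. apply Hn. destruct (f x); simpl in *; [lia|exact I]. }
          specialize (W A).
          specialize (W (Fin (S n))). unfold stepw in W; cbn [wfun] in W; rewrite stepf_big in W by lia.
          eapply nle_trans; [exact W|]. apply warp_mono; simpl; auto. }
        destruct l as [k0|].
        -- apply Key, nle_refl.
        -- destruct (r Om) as [R|] eqn:E; simpl; auto.
           specialize (Key (S R) I). rewrite ?E in Key; simpl in Key; lia.
Qed.
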